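(* Let $H=\varprojlim\langle\{H_n\}_{n\in\mathbb{N}},\{h^n_k\}_{k<n}\rangle$ be a profinite poset and let $\mathbb{P}=\varprojlim\langle\{P_n\}_{n\in\mathbb{N}},\{p^n_k\}_{k<n}\rangle$, where $\langle\{P_n\},\{p^n_k\}\rangle$ is a Fraïssé sequence in the category of finite posets with quotient maps. Then there is a continuous quotient map $f:\mathbb{P}\to H$.
   Context: A quotient map between posets is a surjective order-preserving map $\phi:A\to B$ such that for all $p\le r$ in $B$ there are $x\le y$ in $A$ with $\phi(x)=p,\phi(y)=r$. A profinite poset is an inverse limit $\varprojlim\langle\{P_n\},\{p^m_k\}\rangle=\{(x_n)\in\prod_n P_n:p^{n+1}_n(x_{n+1})=x_n\ \forall n\}$ of nonempty finite posets $P_n$ with quotient maps $p^m_k:P_m\to P_k$ ($k<m$) satisfying $p^k_l\circ p^m_k=p^m_l$, ordered coordinatewise and topologized as a subspace of the product of discrete spaces. Such a sequence is a Fraïssé sequence if (U) for every finite poset $X$ there are $n$ and a quotient map $P_n\to X$, and (A) for every $k$, every finite poset $Y$ and quotient map $f:Y\to P_k$ there exist $\ell>k$ and a quotient map $g:P_\ell\to Y$ with $f\circ g=p^\ell_k$. *)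

(* Defs.v *)
From mathcomp Require Import all_boot.
Set Implicit Arguments. Unset Strict Implicit. Unset Printing Implicit Defensive.

Record finPoset := FinPoset {
  fp_sort :> finType;
  fp_le : rel fp_sort;
  fp_refl : reflexive fp_le;
  fp_anti : antisymmetric fp_le;
  fp_trans : transitive fp_le }.

Definition quotient_map_rel {A B : Type} (leA : A -> A -> Prop)
  (leB : B -> B -> Prop) (f : A -> B) : Prop :=
  [/\ (forall b, exists a, f a = b),
      (forall x y, leA x y -> leB (f x) (f y)) &
      (forall pp r, leB pp r -> exists x y, [/\ leA x y, f x = pp & f y = r])].

Definition quotient_map (A B : finPoset) (f : A -> B) : Prop :=
  quotient_map_rel (fun x y => fp_le x y) (fun x y => fp_le x y) f.

(* An inverse sequence of nonempty finite posets with quotient bonding maps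
   p m k : P m -> P k (meaningful for k < m), compatible under composition. *)
Definition inv_seq (P : nat -> finPoset) (p : forall m k, P m -> P k) : Prop :=
  [/\ (forall n, 0 < #|P n|),
      (forall k m, k < m -> quotient_map (p m k)) &
      (forall l k m, l < k -> k < m -> forall x, p k l (p m k x) = p m l x)].

Definition inv_limit (P : nat -> finPoset) (p : forall m k, P m -> P k) : Type :=
  { x : forall n, P n | forall n, p n.+1 n (x n.+1) = x n }.

Definition lim_le (P : nat -> finPoset) (p : forall m k, P m -> P k)
  (x y : inv_limit p) : Prop :=
  forall n, fp_le (proj1_sig x n) (proj1_sig y n).

Definition lim_quotient_map (P : nat -> finPoset) (p : forall m k, P m -> P k)
  (Q : nat -> finPoset) (q : forall m k, Q m -> Q k)
  (f : inv_limit p -> inv_limit q) : Prop :=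
  quotient_map_rel (@lim_le P p) (@lim_le Q q) f.

(* Continuity w.r.t. the subspace topology of the product of discrete spaces:
   each output coordinate is locally constant, i.e. determined on a basic
   neighbourhood {y | y_i = x_i for all i <= m}. *)
Definition lim_continuous (P : nat -> finPoset) (p : forall m k, P m -> P k)
  (Q : nat -> finPoset) (q : forall m k, Q m -> Q k)
  (f : inv_limit p -> inv_limit q) : Prop :=
  forall (x : inv_limit p) (n : nat), exists m : nat, forall y : inv_limit p,
    (forall i, i <= m -> proj1_sig y i = proj1_sig x i) ->
    proj1_sig (f y) n = proj1_sig (f x) n.

Definition fraisse_seq (P : nat -> finPoset) (p : forall m k, P m -> P k) : Prop :=
  (forall X : finPoset, 0 < #|X| ->
     exists n (g : P n -> X), quotient_map g) /\
  (forall k (Y : finPoset) (f : Y -> P k), quotient_map f ->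
     exists l (g : P l -> Y), [/\ k < l, quotient_map g &
                                 forall x, f (g x) = p l k x]).

(* Main.v *)
Require Import Defs.
From mathcomp Require Import all_boot.
From Stdlib Require Import ClassicalEpsilon FunctionalExtensionality ProofIrrelevance.
Set Implicit Arguments. Unset Strict Implicit. Unset Printing Implicit Defensive.

Lemma dep_choice (T : nat -> Type) (R : forall k, T k -> T k.+1 -> Prop) (t0 : T 0) :
  (forall k (t : T k), exists t', R k t t') ->
  exists a : forall k, T k, a 0 = t0 /\ forall k, R k (a k) (a k.+1).
Proof.
move=> st.
pose s k t := proj1_sig (constructive_indefinite_description _ (st k t)).
exists (fix F k := match k return T k with 0 => t0 | k'.+1 => s k' (F k') end).
split=> // k.
exact: (proj2_sig (constructive_indefinite_description _ (st k _))).
Qed.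

Lemma qm_comp (A B C : finPoset) (f : A -> B) (g : B -> C) :
  quotient_map f -> quotient_map g -> quotient_map (fun x => g (f x)).
Proof.
case=> fs fo fl [gs go gl]; split.
- move=> c; case: (gs c) => b <-; case: (fs b) => a <-; by exists a.
- by move=> x y /fo /go.
- move=> c1 c2 /gl [b1 [b2 [le <- <-]]].
  case: (fl _ _ le) => a1 [a2 [le' <- <-]]; by exists a1, a2.
Qed.

Lemma lim_eq (Q : nat -> finPoset) (q : forall m k, Q m -> Q k) (x y : inv_limit q) :
  (forall n, proj1_sig x n = proj1_sig y n) -> x = y.
Proof.
case: x => x hx; case: y => y hy /= E.
have E' : x = y by apply: functional_extensionality_dep.
subst y; f_equal; apply: proof_irrelevance.
Qed.

Lemma thread_down (Q : nat -> finPoset) (q : forall m k, Q m -> Q k) :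
  inv_seq q -> forall (x : inv_limit q) m n, n < m -> q m n (proj1_sig x m) = proj1_sig x n.
Proof.
case=> _ _ qc [x hx] m n /=; elim: m => // m IH.
rewrite ltnS leq_eqVlt; case/orP=> [/eqP -> //| lt].
by rewrite -(qc n m m.+1 lt (ltnSn m)) hx IH.
Qed.

Section Pullback.
Variables (A B C : finPoset) (f : A -> C) (g : B -> C).
Definition pbT := {ab : A * B | f ab.1 == g ab.2}.
Definition pble : rel pbT := fun x y => fp_le (val x).1 (val y).1 && fp_le (val x).2 (val y).2.
Lemma pble_refl : reflexive pble.
Proof. by move=> x; rewrite /pble !fp_refl. Qed.
Lemma pble_anti : antisymmetric pble.
Proof.
move=> [[a b] ?] [[a' b'] ?]; rewrite /pble /= => /andP[/andP[l1 l2] /andP[l3 l4]].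
apply: val_inj => /=.
by rewrite (@fp_anti _ a a') ?l1 ?l3 // (@fp_anti _ b b') ?l2 ?l4.
Qed.
Lemma pble_trans : transitive pble.
Proof.
move=> y x z /andP[l1 l2] /andP[l3 l4]; apply/andP; split.
- exact: fp_trans l1 l3.
- exact: fp_trans l2 l4.
Qed.
Definition PB : finPoset := FinPoset pble_refl pble_anti pble_trans.
End Pullback.

Section Step.
Variables (H : nat -> finPoset) (h : forall m k, H m -> H k)
  (P : nat -> finPoset) (p : forall m k, P m -> P k).
Arguments h : clear implicits. Arguments p : clear implicits.
Hypotheses (Hh : inv_seq h) (Hp : inv_seq p) (Hf : fraisse_seq p).

Lemma step k n (g : P n -> H k) : quotient_map g ->
  exists l (g' : P l -> H k.+1), [/\ n < l, quotient_map g',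
     (forall x, h k.+1 k (g' x) = g (p l n x)) &
     (forall a1 a2 b1 b2, fp_le a1 a2 -> fp_le b1 b2 -> g a1 = h k.+1 k b1 ->
        g a2 = h k.+1 k b2 ->
        exists a1' a2', [/\ fp_le a1' a2', p l n a1' = a1, p l n a2' = a2,
                           g' a1' = b1 & g' a2' = b2])].
Proof.
move=> [gs go gl].
have [_ hq _] := Hh.
have [hs ho hl] := hq k k.+1 (ltnSn k).
pose Y := PB g (h k.+1 k).
pose pi1 := fun y : Y => (val y).1.
pose pi2 := fun y : Y => (val y).2.
have q1 : quotient_map pi1.
  split.
  - move=> a; case: (hs (g a)) => b hb.
    by exists (exist _ (a, b) (introT eqP (esym hb))).
  - by move=> x y /andP[].
  - move=> a1 a2 la; have [b1 [b2 [le e1 e2]]] := hl _ _ (go _ _ la).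
    exists (exist _ (a1, b1) (introT eqP (esym e1))).
    exists (exist _ (a2, b2) (introT eqP (esym e2))).
    by split=> //=; rewrite /pble /= la le.
have q2 : quotient_map pi2.
  split.
  - move=> b; case: (gs (h k.+1 k b)) => a ha.
    by exists (exist _ (a, b) (introT eqP ha)).
  - by move=> x y /andP[].
  - move=> b1 b2 lb; have [a1 [a2 [le e1 e2]]] := gl _ _ (ho _ _ lb).
    exists (exist _ (a1, b1) (introT eqP e1)).
    exists (exist _ (a2, b2) (introT eqP e2)).
    by split=> //=; rewrite /pble /= lb le.
have [l [G [lt qG comm]]] := Hf.2 n Y pi1 q1.
exists l, (fun x => pi2 (G x)); split => //.
- exact: qm_comp.
- move=> x; rewrite -comm; exact: (esym (eqP (valP (G x)))).
move=> a1 a2 b1 b2 la lb e1 e2.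
pose y1 : Y := exist _ (a1, b1) (introT eqP e1).
pose y2 : Y := exist _ (a2, b2) (introT eqP e2).
have ly : fp_le y1 y2 by apply/andP; split.
have [_ _ lG] := qG.
case: (lG _ _ ly) => x1 [x2 [lx E1 E2]].
exists x1, x2; split => //.
- by rewrite -comm E1.
- by rewrite -comm E2.
- by rewrite /pi2 E1.
- by rewrite /pi2 E2.
Qed.
End Step.

Section Construct.
Variables (H : nat -> finPoset) (h : forall m k, H m -> H k)
  (P : nat -> finPoset) (p : forall m k, P m -> P k).
Arguments h : clear implicits. Arguments p : clear implicits.
Hypotheses (Hh : inv_seq h) (Hp : inv_seq p).
Variables (nn : nat -> nat) (gg : forall k, P (nn k) -> H k).
Arguments gg : clear implicits.
Hypotheses (gq : forall k, quotient_map (gg k)) (ninc : forall k, nn k < nn k.+1)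
 (gcomp : forall k x, h k.+1 k (gg k.+1 x) = gg k (p (nn k.+1) (nn k) x))
 (glift : forall k a1 a2 b1 b2, fp_le a1 a2 -> fp_le b1 b2 -> gg k a1 = h k.+1 k b1 ->
        gg k a2 = h k.+1 k b2 ->
        exists a1' a2', [/\ fp_le a1' a2', p (nn k.+1) (nn k) a1' = a1,
           p (nn k.+1) (nn k) a2' = a2, gg k.+1 a1' = b1 & gg k.+1 a2' = b2]).

Lemma nn_mono k j : k < j -> nn k < nn j.
Proof.
elim: j => // j IH; rewrite ltnS leq_eqVlt; case/orP=> [/eqP -> //|lt].
exact: ltn_trans (IH lt) (ninc j).
Qed.

Lemma nn_ge k : k <= nn k.
Proof. elim: k => // k IH; exact: leq_ltn_trans IH (ninc k). Qed.

Lemma coh_down (a : forall k, P (nn k)) :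
  (forall k, p (nn k.+1) (nn k) (a k.+1) = a k) ->
  forall j k, k < j -> p (nn j) (nn k) (a j) = a k.
Proof.
have [_ _ pc] := Hp.
move=> ha; elim=> // j IH k; rewrite ltnS leq_eqVlt; case/orP=> [/eqP -> //|lt].
by rewrite -(pc _ _ _ (nn_mono lt) (ninc j)) ha IH.
Qed.

Lemma lt_nnS i : i < nn i.+1.
Proof. exact: nn_ge. Qed.

Lemma mk_thread_ok (a : forall k, P (nn k)) :
  (forall k, p (nn k.+1) (nn k) (a k.+1) = a k) ->
  forall i, p i.+1 i (p (nn i.+2) i.+1 (a i.+2)) = p (nn i.+1) i (a i.+1).
Proof.
have [_ _ pc] := Hp.
move=> ha i.
rewrite (pc _ _ _ (ltnSn i) (lt_nnS i.+1)).
by rewrite -(pc _ _ _ (lt_nnS i) (ninc i.+1)) ha.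
Qed.

Definition mk_thread (a : forall k, P (nn k))
  (ha : forall k, p (nn k.+1) (nn k) (a k.+1) = a k) : inv_limit p :=
  exist _ (fun i => p (nn i.+1) i (a i.+1)) (mk_thread_ok ha).

Lemma mk_thread_nn a ha k : proj1_sig (@mk_thread a ha) (nn k) = a k.
Proof. rewrite /=; apply: coh_down => //; exact: leq_trans (nn_ge k) _. Qed.

Lemma fmap_ok (x : inv_limit p) :
  forall k, h k.+1 k (gg k.+1 (proj1_sig x (nn k.+1))) = gg k (proj1_sig x (nn k)).
Proof. by move=> k; rewrite gcomp thread_down. Qed.

Definition fmap (x : inv_limit p) : inv_limit h :=
  exist _ (fun k => gg k (proj1_sig x (nn k))) (@fmap_ok x).

Lemma fmap_qm : lim_quotient_map fmap.
Proof.
have [_ pq _] := Hp.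
have key : forall u v : inv_limit h, lim_le u v -> exists x y,
    [/\ lim_le x y, fmap x = u & fmap y = v].
  move=> u v luv.
  pose T k := {ab : P (nn k) * P (nn k) |
     [/\ fp_le ab.1 ab.2, gg k ab.1 = proj1_sig u k & gg k ab.2 = proj1_sig v k]}.
  pose R k (t : T k) (t' : T k.+1) :=
    p (nn k.+1) (nn k) (proj1_sig t').1 = (proj1_sig t).1 /\
    p (nn k.+1) (nn k) (proj1_sig t').2 = (proj1_sig t).2.
  have [_ _ l0] := gq 0.
  have [a1 [a2 [le e1 e2]]] := l0 _ _ (luv 0).
  have st : forall k (t : T k), exists t', R k t t'.
    move=> k [[c1 c2] [lc ec1 ec2]].
    have hu := proj2_sig u; have hv := proj2_sig v.
    have [c1' [c2' [lc' E1 E2 F1 F2]]] :=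
      glift lc (luv k.+1) (etrans ec1 (esym (hu k))) (etrans ec2 (esym (hv k))).
    by exists (exist _ (c1', c2') (And3 lc' F1 F2)).
  have [t [_ ht]] := @dep_choice T R (exist _ (a1, a2) (And3 le e1 e2)) st.
  pose x := @mk_thread (fun k => (proj1_sig (t k)).1) (fun k => (ht k).1).
  pose y := @mk_thread (fun k => (proj1_sig (t k)).2) (fun k => (ht k).2).
  exists x, y; split.
  - move=> i /=; have [_ po _] := pq _ _ (lt_nnS i).
    apply: po; by case: (proj2_sig (t i.+1)).
  - apply: lim_eq => k; change (gg k (sval x (nn k)) = sval u k); rewrite /x mk_thread_nn; by case: (proj2_sig (t k)).
  - apply: lim_eq => k; change (gg k (sval y (nn k)) = sval v k); rewrite /y mk_thread_nn; by case: (proj2_sig (t k)).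
split.
- move=> u; have [x [y [lxy fx fy]]] := key u u (fun n => fp_refl _); by exists x.
- move=> x y lxy k /=; have [_ go _] := gq k; exact: go.
- move=> u v /key [x [y [? ? ?]]]; by exists x, y.
Qed.

Lemma fmap_cont : lim_continuous fmap.
Proof.
move=> x n; exists (nn n) => y hy /=; by rewrite hy.
Qed.
End Construct.

Theorem mainTheorem5 (H : nat -> finPoset) (h : forall m k, H m -> H k)
  (P : nat -> finPoset) (p : forall m k, P m -> P k) :
  inv_seq h -> inv_seq p -> fraisse_seq p ->
  exists f : inv_limit p -> inv_limit h,
    lim_quotient_map f /\ lim_continuous f.
Proof.
move=> Hh Hp Hf.
pose T k := {n : nat & {g : P n -> H k | quotient_map g}}.
pose R k (s : T k) (s' : T k.+1) :=
  let n := projT1 s in let g := proj1_sig (projT2 s) in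
  let l := projT1 s' in let g' := proj1_sig (projT2 s') in
  [/\ n < l, (forall x, h k.+1 k (g' x) = g (p l n x)) &
     (forall a1 a2 b1 b2, fp_le a1 a2 -> fp_le b1 b2 -> g a1 = h k.+1 k b1 ->
        g a2 = h k.+1 k b2 ->
        exists a1' a2', [/\ fp_le a1' a2', p l n a1' = a1, p l n a2' = a2,
                           g' a1' = b1 & g' a2' = b2])].
have [hne _ _] := Hh.
have [n0 [g0 q0]] := Hf.1 (H 0) (hne 0).
have stp : forall k (t : T k), exists t', R k t t'.
  move=> k [n [g qg]].
  have [l [g' [lt qg' c lf]]] := step Hh Hf qg.
  by exists (existT _ l (exist _ g' qg')).
have [st [_ hst]] := @dep_choice T R (existT _ n0 (exist _ g0 q0)) stp.
pose nn k := projT1 (st k).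
pose gg k : P (nn k) -> H k := proj1_sig (projT2 (st k)).
have gq : forall k, quotient_map (gg k) by move=> k; exact: (proj2_sig (projT2 (st k))).
have ninc : forall k, nn k < nn k.+1 by move=> k; case: (hst k).
have gcomp : forall k x, h k.+1 k (gg k.+1 x) = gg k (p (nn k.+1) (nn k) x)
  by move=> k; case: (hst k).
exists (fmap Hp ninc gcomp); split.
- apply: fmap_qm => // k; by case: (hst k).
- exact: fmap_cont.
Qed.
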